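(* Let $\tilde L$ be a minimum-size counterexample. Then the least element $0_{\tilde L}$ is meet-reducible in $\tilde L$, i.e. it is lower covered by (has) at least two atoms.
   Context: For a poset $P$, $x$ upper covers $y$ if $y<x$ with nothing strictly between. Join-irreducible: upper covers exactly one element; meet-reducible: lower covers more than one element; an atom is an element upper covering the least element. For $x\in P$, ${\uparrow}x=\{y: x\le y\}$. A counterexample is a finite lattice $L$ with $|L|>1$ in which every join-irreducible $j$ satisfies $|{\uparrow}j|>|L|/2$; a minimum-size counterexample is a counterexample $\tilde L$ such that no counterexample has fewer elements. *)

(* Defs.v *)
From HB Require Import structures.
From mathcomp Require Import all_boot all_order.
Set Implicit Arguments. Unset Strict Implicit. Unset Printing Implicit Defensive.
Import Order.TTheory.
Local Open Scope order_scope.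

Definition covers (d : Order.disp_t) (L : finTBLatticeType d) (x y : L) : bool :=
  (y < x) && [forall z : L, ~~ ((y < z) && (z < x))].

Definition join_irreducible (d : Order.disp_t) (L : finTBLatticeType d) (j : L) : bool :=
  #|[set y : L | covers j y]| == 1%N.

Definition meet_reducible (d : Order.disp_t) (L : finTBLatticeType d) (x : L) : bool :=
  (1 < #|[set y : L | covers y x]|)%N.

Definition up_set (d : Order.disp_t) (L : finTBLatticeType d) (x : L) : {set L} :=
  [set y : L | x <= y].

Definition counterexample (d : Order.disp_t) (L : finTBLatticeType d) : Prop :=
  (1 < #|L|)%N /\
  forall j : L, join_irreducible j -> (#|L| < 2 * #|up_set j|)%N.

Definition min_counterexample (d : Order.disp_t) (L : finTBLatticeType d) : Prop :=
  counterexample L /\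
  forall (d' : Order.disp_t) (L' : finTBLatticeType d'),
    counterexample L' -> (#|L| <= #|L'|)%N.

(* Main.v *)
Require Import Defs.
From HB Require Import structures.
From mathcomp Require Import all_boot all_order.
From mathcomp Require Import zify.
Set Implicit Arguments. Unset Strict Implicit. Unset Printing Implicit Defensive.
Import Order.TTheory.
Local Open Scope order_scope.

Section Up.
Variables (d : Order.disp_t) (L : finTBLatticeType d) (a : L).
Definition UpT := {x : L | a <= x}.
HB.instance Definition _ := Finite.on UpT.
Definition leS (u v : UpT) := val u <= val v.
Lemma leS_refl : reflexive leS. Proof. by move=> u; rewrite /leS. Qed.
Lemma leS_anti : antisymmetric leS.
Proof. by move=> u v /le_anti H; apply: val_inj. Qed.
Lemma leS_trans : transitive leS.
Proof. by move=> u v w; rewrite /leS; apply: le_trans. Qed.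
HB.instance Definition _ := Order.Le_isPOrder.Build (Order.Disp tt tt) UpT leS_refl leS_anti leS_trans.
Lemma meetS_in (u v : UpT) : a <= Order.meet (val u) (val v). Proof. by rewrite lexI (valP u) (valP v). Qed.
Definition meetS (u v : UpT) : UpT := exist _ (Order.meet (val u) (val v)) (meetS_in u v).
Definition joinS (u v : UpT) : UpT := exist _ (Order.join (val u) (val v)) (le_trans (valP u) (leUl _ _)).
Lemma meetSP (x y z : UpT) : (x <= meetS y z) = (x <= y) && (x <= z).
Proof. exact: lexI. Qed.
Lemma joinSP (x y z : UpT) : (joinS x y <= z) = (x <= z) && (y <= z).
Proof. exact: leUx. Qed.
HB.instance Definition _ := Order.POrder_MeetJoin_isLattice.Build (Order.Disp tt tt) UpT meetSP joinSP.
Definition botS : UpT := exist _ a (lexx a).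
Lemma le0S (x : UpT) : botS <= x. Proof. exact: valP. Qed.
HB.instance Definition _ := Order.hasBottom.Build (Order.Disp tt tt) UpT le0S.
Definition topS : UpT := exist _ \top (lex1 a).
Lemma le1S (x : UpT) : x <= topS. Proof. exact: lex1. Qed.
HB.instance Definition _ := Order.hasTop.Build (Order.Disp tt tt) UpT le1S.
Lemma le_UpT (u v : UpT) : (u <= v) = (val u <= val v). Proof. by []. Qed.
Lemma lt_UpT (u v : UpT) : (u < v) = (val u < val v).
Proof. by rewrite !lt_def le_UpT val_eqE. Qed.

Lemma covers_UpT (u v : UpT) : covers u v = covers (val u) (val v).
Proof.
rewrite /covers lt_UpT; case: (val v < val u) => //=.
apply/forallP/forallP.
- move=> H z; apply/negP => /andP [h1 h2].
  have az : a <= z := le_trans (valP v) (ltW h1).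
  by move: (H (exist _ z az)); rewrite !lt_UpT /= h1 h2.
- by move=> H z; rewrite !lt_UpT; exact: H.
Qed.

Lemma card_UpT : #|{: UpT}| = #|up_set a|.
Proof. by rewrite card_sig; apply: eq_card => x; rewrite /up_set inE. Qed.

Lemma card_up_UpT (j : UpT) : #|up_set j| = #|up_set (val j)|.
Proof.
suff -> : up_set (val j) = val @: up_set j by rewrite card_imset //; exact: val_inj.
apply/setP => y; rewrite /up_set inE; apply/idP/imsetP.
- by move=> hy; exists (exist _ y (le_trans (valP j) hy)); rewrite ?inE.
- by move=> [z]; rewrite inE => hz ->.
Qed.

Lemma card_covers_UpT (hge : forall x : L, x != \bot -> a <= x)
  (hatom : forall y : L, covers y \bot -> y = a) (j : UpT) :
  val j != a ->
  #|[set y : UpT | covers j y]| = #|[set y : L | covers (val j) y]|.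
Proof.
move=> hj.
suff -> : [set y : L | covers (val j) y] = val @: [set y : UpT | covers j y].
  by rewrite card_imset //; exact: val_inj.
apply/setP => y; rewrite inE; apply/idP/imsetP; last first.
  by move=> [z]; rewrite inE covers_UpT => hz ->.
- move=> hy.
  have ynb : y != \bot.
    by apply/negP => /eqP yb; move: hy; rewrite yb => /hatom; apply/eqP.
  by exists (exist _ y (hge _ ynb)); rewrite // inE covers_UpT.
Qed.

Lemma card_covers_bot (j : UpT) : val j = a -> #|[set y : UpT | covers j y]| = 0%N.
Proof.
move=> hj; apply/eqP; rewrite cards_eq0; apply/eqP/setP => y; rewrite !inE.
apply/negP => /andP [h _]; move: h; rewrite lt_UpT hj => h.
by move: (lt_le_trans h (valP y)); rewrite ltxx.
Qed.
End Up.

Lemma atom_below (d : Order.disp_t) (L : finTBLatticeType d) (x : L) :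
  \bot < x -> exists z : L, covers z \bot && (z <= x).
Proof.
move=> hx.
pose P := fun z : L => (\bot < z) && (z <= x).
have Px : P x by rewrite /P hx lexx.
case: (@arg_minnP _ x P (fun z => #|[set w : L | w < z]|) Px) => z /andP[hz zx] hmin.
exists z; rewrite zx andbT /covers hz /=.
apply/forallP => w; apply/negP => /andP[h1 h2].
have := hmin w; rewrite /P h1 (le_trans (ltW h2) zx) /= => /(_ isT).
apply/negP; rewrite -ltnNge; apply: proper_card; apply/properP; split.
- by apply/subsetP => u; rewrite !inE => /lt_trans; apply.
- by exists w; rewrite !inE ?h2 ?ltxx.
Qed.

Theorem corollary2p2 (d : Order.disp_t) (L : finTBLatticeType d) :
  min_counterexample L -> meet_reducible (\bot : L).
Proof.
move=> [[hcard hji] hmin]; rewrite /meet_reducible ltnNge; apply/negP => hle.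
have [x hx] : exists x : L, \bot < x.
  have : (0 < #|[set~ (\bot : L)]|)%N by rewrite cardsC1 -subn1 subn_gt0.
  case/card_gt0P => x; rewrite !inE => hx; exists x; by rewrite lt_def hx le0x.
have [a /andP[ha _]] := atom_below hx.
have hatom : forall y : L, covers y \bot -> y = a.
  move=> y hy; apply/eqP; apply/negPn/negP => hne.
  have : ([set y; a] \subset [set y | covers y (\bot : L)]).
    by apply/subsetP => u; rewrite !inE => /orP[] /eqP ->.
  move/subset_leq_card; rewrite cards2 hne => h; move: (leq_trans h hle).
  by [].
have hge : forall x : L, x != \bot -> a <= x.
  move=> y hy; have hy' : \bot < y by rewrite lt_def hy le0x.
  have [z /andP[hz zy]] := atom_below hy'.
  by rewrite -(hatom z hz).
have abot : a != \bot by move: ha => /andP[h _]; rewrite lt_def in h; case/andP: h.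
have ja : join_irreducible a.
  rewrite /join_irreducible; apply/cards1P; exists \bot; apply/setP => y; rewrite !inE.
  apply/idP/eqP.
  - move=> /andP[ya _]; apply/eqP; apply/negPn/negP => /hge ay.
    by move: (lt_le_trans ya ay); rewrite ltxx.
  - by move=> ->; exact: ha.
have upa : #|up_set a| = #|L|.-1.
  rewrite -(cardsC1 (\bot : L)); apply: eq_card => y; rewrite /up_set !inE; apply/idP/idP.
  - move=> ay; apply/negP => /eqP yb; move: ay; rewrite yb => ab.
    by move: abot; rewrite eq_le ab le0x.
  - exact: hge.
have L2 := hji a ja; rewrite upa in L2.
have cS : counterexample (UpT a).
  split; first by rewrite card_UpT upa; lia.
  move=> j jj; rewrite card_UpT upa card_up_UpT.
  case: (eqVneq (val j) a) => hj.
    by move: jj; rewrite /join_irreducible card_covers_bot.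
  have jL : join_irreducible (val j).
    by move: jj; rewrite /join_irreducible card_covers_UpT.
  have := hji _ jL; lia.
have := hmin _ _ cS; rewrite card_UpT upa.
lia.
Qed.
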